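(* Let $(M,\rho)$ be a metric space, let $f,g:M\to\mathbb{R}\cup\{+\infty\}$, and let $\lambda\in\mathbb{R}$ be such that $L_\lambda(f-g)\cap\operatorname{dom} f\cap\operatorname{dom} g\neq\varnothing$. Let $M_1:=L_\lambda(f-g)$ and $f_1:=f|_{M_1}$, regarded as a function on $(M_1,\rho)$. If $x\in M_1\cap\operatorname{dom} g$ satisfies $|\widetilde\nabla f|(x)>|\widetilde\nabla g|(x)$, then $|\widetilde\nabla f_1|(x)=|\widetilde\nabla f|(x)$.
   Context: Functions take values in $\mathbb{R}\cup\{+\infty\}$; $\operatorname{dom} f:=\{x:f(x)<+\infty\}$; the expression $\infty-\infty$ is undefined. For $\lambda\in\mathbb{R}$, $L_\lambda(f-g):=\{x\in\operatorname{dom} f:\ f(x)-g(x)\le\lambda\}$ (where $f(x)-g(x)=-\infty$ if $g(x)=+\infty$). $[t]^+:=\max\{0,t\}$, with $[f(x)-f(y)]^+:=0$ if $f(y)=+\infty$. For $x\in\operatorname{dom} f$, the global slope is $|\widetilde\nabla f|(x):=\sup_{y\neq x}\frac{[f(x)-f(y)]^+}{\rho(x,y)}\in[0,+\infty]$; for a restriction to a subset, $y$ ranges over the subset. *)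

(* Defs.v *)
From mathcomp Require Import all_boot all_order all_algebra.
From mathcomp Require Import all_classical all_reals.
From mathcomp Require Import ereal.
Set Implicit Arguments. Unset Strict Implicit. Unset Printing Implicit Defensive.
Import Order.TTheory GRing.Theory Num.Theory.
Local Open Scope classical_set_scope.
Local Open Scope ring_scope.

Definition is_metric (R : realType) (M : Type) (rho : M -> M -> R) : Prop :=
  [/\ (forall x y, 0 <= rho x y),
      (forall x y, rho x y = 0 <-> x = y),
      (forall x y, rho x y = rho y x) &
      (forall x y z, rho x z <= rho x y + rho y z)].

(* Functions M -> R \cup {+oo}: extended-real valued, never -oo. *)
Definition no_minfty (R : realType) (M : Type) (f : M -> \bar R) : Prop :=
  forall x, f x <> -oo%E.

Definition dom (R : realType) (M : Type) (f : M -> \bar R) : set M :=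
  [set x | (f x < +oo)%E].

(* L_lambda(f - g) = {x in dom f : f x - g x <= lambda},
   where f x - g x = -oo if g x = +oo. *)
Definition sublevel (R : realType) (M : Type) (f g : M -> \bar R) (lam : R)
  : set M :=
  [set x | (f x < +oo)%E /\ (g x = +oo%E \/ (f x - g x <= lam%:E)%E)].

(* The quotient [f x - f y]^+ / rho(x,y), with [f x - f y]^+ := 0 if
   f y = +oo (used for x in dom f). *)
Definition slope_term (R : realType) (M : Type) (rho : M -> M -> R)
  (f : M -> \bar R) (x y : M) : \bar R :=
  match f y with
  | EFin fy => ((Num.max 0 (fine (f x) - fy)) / rho x y)%:E
  | _ => 0%E
  end.

(* Global slope of f at x restricted to the subset A (y ranges over A \ {x});
   the supremum is taken in [0, +oo] (hence the 0, which only matters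
   when A \ {x} is empty). *)
Definition global_slope_on (R : realType) (M : Type) (rho : M -> M -> R)
  (A : set M) (f : M -> \bar R) (x : M) : \bar R :=
  ereal_sup ([set 0%E] `|` [set slope_term rho f x y | y in A `\ x]).

Definition global_slope (R : realType) (M : Type) (rho : M -> M -> R)
  (f : M -> \bar R) (x : M) : \bar R :=
  global_slope_on rho setT f x.

(* Main.v *)
Require Import Defs.
From mathcomp Require Import all_boot all_order all_algebra.
From mathcomp Require Import all_classical all_reals.
From mathcomp Require Import ereal.
From mathcomp Require Import lra.
Import Order.TTheory GRing.Theory Num.Theory.
Local Open Scope classical_set_scope.
Local Open Scope ring_scope.

Theorem lemma2p5 (R : realType) (M : Type) (rho : M -> M -> R)
  (f g : M -> \bar R) (lam : R) (x : M) :
  is_metric rho -> no_minfty f -> no_minfty g ->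
  (sublevel f g lam `&` dom f `&` dom g !=set0) ->
  sublevel f g lam x -> dom g x ->
  (global_slope rho g x < global_slope rho f x)%E ->
  global_slope_on rho (sublevel f g lam) f x = global_slope rho f x.
Proof.
move=> [rho0 rhoeq _ _] nf ng _ [fxf gxl] gxd Hlt.
have [fx Efx] : exists fx, f x = fx%:E.
  move: fxf (nf x); case: (f x) => // r _ _; by exists r.
have [gx Egx] : exists gx, g x = gx%:E.
  move: gxd (ng x); rewrite /dom /=; case: (g x) => // r _ _; by exists r.
set G := global_slope rho g x in Hlt.
have G0 : (0 <= G)%E by apply: ereal_sup_ubound; left.
have key : forall y, y <> x -> (G < slope_term rho f x y)%E -> sublevel f g lam y.
  move=> y yx.
  have Hg : (slope_term rho g x y <= G)%E.
    apply: ereal_sup_ubound; right; exists y => //; split => //.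
  move: Hg; rewrite /slope_term Efx Egx /=.
  have rp : 0 < rho x y.
    rewrite lt_neqAle rho0 andbT; apply/eqP => /esym/rhoeq => h; by apply: yx.
  case Efy: (f y) => [fy||] /=; last 2 first.
  - by move=> _ /(le_lt_trans G0); rewrite ltxx.
  - by move=> _ /(le_lt_trans G0); rewrite ltxx.
  move=> Hg Hf.
  rewrite /sublevel /=; rewrite Efy; split; first by rewrite ltry.
  case Egy: (g y) Hg => [gy||] /=.
  2: by left.
  2: by move: (ng y); rewrite Egy.
  move=> Hg; right.
  have := lt_le_trans (le_lt_trans Hg Hf) (lexx _).
  rewrite lte_fin ltr_pM2r ?invr_gt0 // => Hm.
  move: gxl; rewrite Egx Efx /=; case => // Hx.
  rewrite -EFinB lee_fin; move: Hx; rewrite -EFinB lee_fin => Hx.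
  move: Hm; rewrite /Num.max; case: ifP; case: ifP => ? ? ?; lra.
apply/eqP; rewrite eq_le; apply/andP; split.
  apply: le_ereal_sup => e [->|[y [_ yx] <-]]; [by left| right].
  by exists y.
rewrite leNgt; apply/negP => H1.
have Hm : (Order.max G (global_slope_on rho (sublevel f g lam) f x) < global_slope rho f x)%E.
  by rewrite gt_max Hlt H1.
have [e [->|[y [_ yx] <-]] He] := ereal_sup_gt Hm.
  by move: He; rewrite gt_max => /andP[/(le_lt_trans G0)]; rewrite ltxx.
move: He; rewrite gt_max => /andP[HG HS].
have yM := key y yx HG.
have : (slope_term rho f x y <= global_slope_on rho (sublevel f g lam) f x)%E.
  apply: ereal_sup_ubound; right; exists y => //.
by rewrite leNgt HS.
Qed.
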